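(* Let $A$ be a finite field and let $S,\bar S\subseteq A$ be subsets with $\#S=\#\bar S$. Let $\psi:A\to S$ and $\bar\psi:A\to\bar S$ be surjective maps such that $\bar\psi$ is additive, i.e. $\bar\psi(x+y)=\bar\psi(x)+\bar\psi(y)$ for all $x,y\in A$. Let $u:A\to A$, $v:A\to A$ and $h:S\to\bar S$ be maps such that $\bar\psi(u(x)+v(x))=h(\psi(x))$ for all $x\in A$. Assume moreover that $\bar\psi(v(x))=0$ for every $x\in A$, and that $v$ is constant on $\psi^{-1}(s)$ for every $s\in S$. Then the map $f(x)=u(x)+v(x)$ is a permutation of $A$ if and only if $u$ is a permutation of $A$. *)

(* Defs.v *)
From mathcomp Require Import all_boot all_algebra all_field.
Set Implicit Arguments. Unset Strict Implicit. Unset Printing Implicit Defensive.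

(* Main.v *)
Require Import Defs.
From mathcomp Require Import all_boot all_algebra all_field.
Import GRing.Theory.
Local Open Scope ring_scope.

Lemma key (A : finFieldType) (S Sbar : {set A}) (psi psibar v h g g' : A -> A)
  (hcard : #|S| = #|Sbar|)
  (hpsi_in : forall x, psi x \in S)
  (hh : forall s, s \in S -> h s \in Sbar)
  (hpsibar_surj : forall s, s \in Sbar -> exists x, psibar x = s)
  (hvconst : forall x y, psi x = psi y -> v x = v y)
  (hg : forall x, psibar (g x) = h (psi x))
  (hg' : forall x, psibar (g' x) = h (psi x))
  (hrel : forall x y, v x = v y -> g x = g y -> g' x = g' y) :
  bijective g' -> bijective g.
Proof.
move=> [g'i K1 K2].
have hinj : {in S &, injective h}.
  have E : h @: S = Sbar.
    apply/eqP; rewrite eqEsubset; apply/andP; split.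
      by apply/subsetP => y /imsetP [s Hs ->]; apply: hh.
    apply/subsetP => y Hy.
    have [z <-] := hpsibar_surj y Hy.
    by rewrite -[z]K2 hg'; apply: imset_f; apply: hpsi_in.
  have Hc : #|h @: S| == #|S| by rewrite E hcard.
  by move/imset_injP: Hc.
apply: injF_bij => x y Hxy.
have Hp : psi x = psi y.
  by apply: hinj; rewrite ?hpsi_in // -hg -hg Hxy.
have Hv := hvconst _ _ Hp.
by apply: (can_inj K1); apply: hrel.
Qed.

Theorem mainTheorem1 (A : finFieldType) (S Sbar : {set A})
  (psi psibar u v h : A -> A)
  (hcard : #|S| = #|Sbar|)
  (hpsi_in : forall x, psi x \in S)
  (hpsi_surj : forall s, s \in S -> exists x, psi x = s)
  (hpsibar_in : forall x, psibar x \in Sbar)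
  (hpsibar_surj : forall s, s \in Sbar -> exists x, psibar x = s)
  (hpsibar_add : forall x y, psibar (x + y) = psibar x + psibar y)
  (hh : forall s, s \in S -> h s \in Sbar)
  (hcomm : forall x, psibar (u x + v x) = h (psi x))
  (hv0 : forall x, psibar (v x) = 0)
  (hvconst : forall x y, psi x = psi y -> v x = v y) :
  bijective (fun x => u x + v x) <-> bijective u.
Proof.
have hu : forall x, psibar (u x) = h (psi x).
  by move=> x; rewrite -hcomm hpsibar_add hv0 addr0.
split.
  apply: (@key A S Sbar psi psibar v h u (fun x => u x + v x) hcard hpsi_in hh hpsibar_surj hvconst hu hcomm).
  by move=> x y -> ->.
apply: (@key A S Sbar psi psibar v h (fun x => u x + v x) u hcard hpsi_in hh hpsibar_surj hvconst hcomm hu).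
by move=> x y Hv /= H; move: H; rewrite Hv => /addIr.
Qed.
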